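(* Let $\mathcal{A}\in\mathbb{R}^{m\times m\times n}$ be $(1,2)$-symmetric and let $r_1\le m$, $r_3\le n$. Assume that the solution $(U,V,W)$ of the best rank-$(r_1,r_1,r_3)$ approximation problem for $\mathcal{A}$ is unique (as an equivalence class). Then a representative of the solution can be chosen with $U=V$, and for this representative the core tensor $\mathcal{F}=\mathcal{A}\cdot(U,U,W)$ is $(1,2)$-symmetric.
   Context: A tensor $\mathcal{A}\in\mathbb{R}^{m\times m\times n}$ is $(1,2)$-symmetric if $\mathcal{A}(i,j,k)=\mathcal{A}(j,i,k)$ for all $i,j,k$. Multilinear multiplication: for $\mathcal{H}\in\mathbb{R}^{p\times q\times r}$ and matrices $X\in\mathbb{R}^{l\times p}$, $Y\in\mathbb{R}^{m\times q}$, $Z\in\mathbb{R}^{n\times r}$, $(X,Y,Z)\cdot\mathcal{H}\in\mathbb{R}^{l\times m\times n}$ has entries $\sum_{\alpha,\beta,\gamma}x_{i\alpha}y_{j\beta}z_{k\gamma}h_{\alpha\beta\gamma}$, and $\mathcal{A}\cdot(X,Y,Z):=(X^{T},Y^{T},Z^{T})\cdot\mathcal{A}\in\mathbb{R}^{p\times q\times r}$. The norm is the Frobenius norm $\|\mathcal{A}\|^2=\sum a_{\alpha\beta\gamma}^2$. The best rank-$(r_1,r_2,r_3)$ approximation problem for $\mathcal{A}$ is $\min\|\mathcal{A}-(X,Y,Z)\cdot\mathcal{H}\|$ over $X,Y,Z$ with orthonormal columns ($r_1,r_2,r_3$ columns respectively) and cores $\mathcal{H}\in\mathbb{R}^{r_1\times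 r_2\times r_3}$, equivalently $\max\|\mathcal{A}\cdot(X,Y,Z)\|$ over such $X,Y,Z$; a solution is a triple $(U,V,W)$, with core $\mathcal{F}=\mathcal{A}\cdot(U,V,W)$. A solution is regarded as an equivalence class: $(U,V,W)$ is identified with $(UQ_1,VQ_2,WQ_3)$ for all orthogonal $Q_i\in\mathbb{R}^{r_i\times r_i}$; ''unique solution'' means the equivalence class of maximizers is unique. *)

(* Defs.v *)
From HB Require Import structures.
From mathcomp Require Import all_boot all_order all_algebra.
From mathcomp Require Import reals.
Set Implicit Arguments. Unset Strict Implicit. Unset Printing Implicit Defensive.
Import Order.TTheory GRing.Theory Num.Theory.
Local Open Scope ring_scope.

Definition tensor (R : Type) (p q r : nat) := 'I_p -> 'I_q -> 'I_r -> R.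

Section Tensors.
Variable R : realType.

Definition sym12 (m n : nat) (A : tensor R m m n) : Prop :=
  forall (i j : 'I_m) (k : 'I_n), A i j k = A j i k.

(* A . (X,Y,Z) := (X^T, Y^T, Z^T) . A ; entries
   sum_{i,j,k} x_{i a} y_{j b} z_{k c} A(i,j,k). *)
Definition mlmul (l m n p q r : nat) (A : tensor R l m n)
  (X : 'M[R]_(l, p)) (Y : 'M[R]_(m, q)) (Z : 'M[R]_(n, r)) : tensor R p q r :=
  fun a b c => \sum_(i < l) \sum_(j < m) \sum_(k < n)
                 X i a * Y j b * Z k c * A i j k.

Definition tnorm (p q r : nat) (H : tensor R p q r) : R :=
  Num.sqrt (\sum_(a < p) \sum_(b < q) \sum_(c < r) H a b c ^+ 2).

Definition orthonormal_cols (m r : nat) (X : 'M[R]_(m, r)) : Prop :=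
  X^T *m X = 1%:M.

Definition orthogonal_mx (r : nat) (Q : 'M[R]_r) : Prop :=
  Q^T *m Q = 1%:M.

(* (U,V,W) solves the best rank-(r1,r2,r3) approximation problem, in the
   equivalent form  max ||A . (X,Y,Z)||  over orthonormal X,Y,Z. *)
Definition is_solution (m1 m2 m3 r1 r2 r3 : nat) (A : tensor R m1 m2 m3)
  (U : 'M[R]_(m1, r1)) (V : 'M[R]_(m2, r2)) (W : 'M[R]_(m3, r3)) : Prop :=
  [/\ orthonormal_cols U, orthonormal_cols V, orthonormal_cols W &
      forall (X : 'M[R]_(m1, r1)) (Y : 'M[R]_(m2, r2)) (Z : 'M[R]_(m3, r3)),
        orthonormal_cols X -> orthonormal_cols Y -> orthonormal_cols Z ->
        tnorm (mlmul A X Y Z) <= tnorm (mlmul A U V W)].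

Definition equiv_sol (m1 m2 m3 r1 r2 r3 : nat)
  (U : 'M[R]_(m1, r1)) (V : 'M[R]_(m2, r2)) (W : 'M[R]_(m3, r3))
  (U' : 'M[R]_(m1, r1)) (V' : 'M[R]_(m2, r2)) (W' : 'M[R]_(m3, r3)) : Prop :=
  exists (Q1 : 'M[R]_r1) (Q2 : 'M[R]_r2) (Q3 : 'M[R]_r3),
    [/\ orthogonal_mx Q1, orthogonal_mx Q2 & orthogonal_mx Q3] /\
    [/\ U' = U *m Q1, V' = V *m Q2 & W' = W *m Q3].

Definition unique_solution (m1 m2 m3 r1 r2 r3 : nat) (A : tensor R m1 m2 m3) : Prop :=
  (exists (U : 'M[R]_(m1, r1)) (V : 'M[R]_(m2, r2)) (W : 'M[R]_(m3, r3)),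
      is_solution A U V W) /\
  forall (U U' : 'M[R]_(m1, r1)) (V V' : 'M[R]_(m2, r2)) (W W' : 'M[R]_(m3, r3)),
    is_solution A U V W -> is_solution A U' V' W' -> equiv_sol U V W U' V' W'.

End Tensors.

(* Main.v *)
Require Import Defs.
From HB Require Import structures.
From mathcomp Require Import all_boot all_order all_algebra.
From mathcomp Require Import reals.
From mathcomp Require Import ring.
Import Order.TTheory GRing.Theory Num.Theory.
Local Open Scope ring_scope.

Section Aux.
Variable R : realType.

Lemma swap_entry (l n p q r : nat) (A : tensor R l l n) (X : 'M[R]_(l, p))
  (Y : 'M[R]_(l, q)) (Z : 'M[R]_(n, r)) a b c :
  sym12 A -> mlmul A Y X Z b a c = mlmul A X Y Z a b c.
Proof.
move=> sA; rewrite /mlmul [RHS]exchange_big /=.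
apply: eq_bigr => i _; apply: eq_bigr => j _; apply: eq_bigr => k _.
by rewrite sA [Y _ _ * _]mulrC.
Qed.

Lemma tnorm_swap (p r : nat) (H H' : tensor R p p r) :
  (forall a b c, H' a b c = H b a c) -> tnorm H' = tnorm H.
Proof.
move=> e; rewrite /tnorm; congr Num.sqrt; rewrite [RHS]exchange_big /=.
by apply: eq_bigr => a _; apply: eq_bigr => b _; apply: eq_bigr => c _; rewrite e.
Qed.

Lemma mode2 (l m n p q r : nat) (A : tensor R l m n) (X : 'M[R]_(l, p))
  (Y : 'M[R]_(m, q)) (Z : 'M[R]_(n, r)) (Q : 'M[R]_q) a b c :
  mlmul A X (Y *m Q) Z a b c = \sum_(b' < q) Q b' b * mlmul A X Y Z a b' c.
Proof.
rewrite /mlmul.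
under [RHS]eq_bigr => b' _ do rewrite mulr_sumr.
rewrite [RHS]exchange_big /=; apply: eq_bigr => i _.
under [RHS]eq_bigr => b' _ do rewrite mulr_sumr.
rewrite [RHS]exchange_big /=; apply: eq_bigr => j _.
under [RHS]eq_bigr => b' _ do rewrite mulr_sumr.
rewrite [RHS]exchange_big /=; apply: eq_bigr => k _.
rewrite mxE mulr_sumr !mulr_suml; apply: eq_bigr => b' _.
by ring.
Qed.

Lemma sumsq_orth (q : nat) (Q : 'M[R]_q) (f : 'I_q -> R) :
  Q *m Q^T = 1%:M ->
  \sum_(b < q) (\sum_(b' < q) Q b' b * f b') ^+ 2 = \sum_(b < q) f b ^+ 2.
Proof.
move=> hQ.
pose v := \row_(b < q) f b.
have e1 : \sum_(b < q) (\sum_(b' < q) Q b' b * f b') ^+ 2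
   = ((v *m Q) *m (v *m Q)^T) ord0 ord0.
  have h : forall b, \sum_(b' < q) Q b' b * f b' = (v *m Q) ord0 b.
    by move=> b; rewrite mxE; apply: eq_bigr => b' _; rewrite mxE mulrC.
  under eq_bigr => b _ do rewrite h.
  by rewrite [RHS]mxE; apply: eq_bigr => b _; rewrite [(_^T) _ _]mxE expr2.
rewrite e1 trmx_mul !mulmxA -(mulmxA v Q) hQ mulmx1 mxE.
by apply: eq_bigr => b _; rewrite !mxE expr2.
Qed.

Lemma mode2_norm (l m n p q r : nat) (A : tensor R l m n) (X : 'M[R]_(l, p))
  (Y : 'M[R]_(m, q)) (Z : 'M[R]_(n, r)) (Q : 'M[R]_q) :
  orthogonal_mx Q ->
  tnorm (mlmul A X (Y *m Q) Z) = tnorm (mlmul A X Y Z).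
Proof.
move=> /mulmx1C hQ; rewrite /tnorm; congr Num.sqrt.
apply: eq_bigr => a _.
rewrite exchange_big [RHS]exchange_big /=; apply: eq_bigr => c _.
under eq_bigr => b _ do rewrite mode2.
by rewrite (@sumsq_orth _ _ (fun b' => mlmul A X Y Z a b' c) hQ).
Qed.

End Aux.

Theorem proposition2p2 (R : realType) (m n r1 r3 : nat)
  (A : tensor R m m n) :
  sym12 A -> (r1 <= m)%N -> (r3 <= n)%N ->
  @unique_solution R m m n r1 r1 r3 A ->
  exists (U : 'M[R]_(m, r1)) (W : 'M[R]_(n, r3)),
    is_solution A U U W /\ sym12 (mlmul A U U W).
Proof.
move=> sA _ _ [[U [V [W sol]]] uniq].
have solVU : is_solution A V U W.
  case: sol => oU oV oW hmax; split => // X Y Z oX oY oZ.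
  have eq1 : forall (X' Y' : 'M[R]_(m, r1)) (Z' : 'M[R]_(n, r3)),
      tnorm (mlmul A X' Y' Z') = tnorm (mlmul A Y' X' Z').
    move=> X' Y' Z'; apply: tnorm_swap => a b c.
    by rewrite swap_entry.
  by rewrite eq1 (eq1 V U); apply: hmax.
have [Q1 [Q2 [Q3 [[o1 o2 o3] [eV eU eW]]]]] := uniq _ _ _ _ _ _ sol solVU.
exists U, W; split.
  case: sol => oU oV oW hmax; split => // X Y Z oX oY oZ.
  have h := @mode2_norm R _ _ _ _ _ _ A U V W Q2 o2; rewrite -eU in h.
  by rewrite h; apply: hmax.
by move=> i j k; rewrite -swap_entry.
Qed.
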